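(* Let $M$ be a simple rank-$5$ binary matroid having a restriction isomorphic to $M(K_{3,3})$. Then $M$ is $(2,2)$-uniform if and only if $M$ is affine.
   Context: A matroid is $(2,2)$-uniform if it has no minor isomorphic to $U_{2,2}\oplus U_{0,2}$. $M(K_{3,3})$ is the cycle matroid of the complete bipartite graph $K_{3,3}$ (it has rank $5$). A binary matroid is affine if it has a representation over $GF(2)$ in which every column has last entry $1$; for simple rank-$5$ binary matroids this is equivalent to being a restriction of the affine geometry $AG(4,2)$. *)

(* Defs.v *)
From HB Require Import structures.
From mathcomp Require Import all_boot all_order all_algebra.
Set Implicit Arguments. Unset Strict Implicit. Unset Printing Implicit Defensive.
Import GRing.Theory.

Definition matroid_rank (E : finType) (r : {set E} -> nat) : Prop :=
  [/\ (forall X, r X <= #|X|),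
      (forall X Y : {set E}, X \subset Y -> r X <= r Y) &
      (forall X Y : {set E}, r (X :|: Y) + r (X :&: Y) <= r X + r Y)].

Definition vec_rank (K : fieldType) (E : finType) (n : nat)
  (A : E -> 'rV[K]_n) (X : {set E}) : nat :=
  \rank (\sum_(x in X) <<A x>>)%MS.

Definition binary (E : finType) (r : {set E} -> nat) : Prop :=
  exists n (A : E -> 'rV['F_2]_n), forall X, r X = vec_rank A X.

Definition affine (E : finType) (r : {set E} -> nat) : Prop :=
  exists n (A : E -> 'rV['F_2]_n.+1),
    (forall e, A e ord0 ord_max = 1%R) /\ (forall X, r X = vec_rank A X).

Definition simple_matroid (E : finType) (r : {set E} -> nat) : Prop :=
  (forall e, r [set e] = 1) /\ (forall e f, e != f -> r [set e; f] = 2).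

(* N (on ground set F, rank rN) is isomorphic to a minor of M:
   there is a set C (contracted) and an injection f : F -> E whose image
   is disjoint from C, such that (M / C) restricted to f(F) is isomorphic
   to N via f; all other elements are deleted. *)
Definition has_minor (E F : finType) (r : {set E} -> nat) (rN : {set F} -> nat)
  : Prop :=
  exists (C : {set E}) (f : F -> E),
    [/\ injective f, [disjoint [set f x | x in F] & C] &
        forall X : {set F}, rN X = r (f @: X :|: C) - r C].

Definition has_restriction (E F : finType) (r : {set E} -> nat)
  (rN : {set F} -> nat) : Prop :=
  exists f : F -> E, injective f /\ forall X : {set F}, rN X = r (f @: X).

(* U_{2,2} (+) U_{0,2} on ground set 'I_4: elements 0,1 coloops, 2,3 loops. *)
Definition U22_U02_rank (X : {set 'I_4}) : nat :=
  #|X :&: [set (inord 0 : 'I_4); inord 1]|.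

Definition two_two_uniform (E : finType) (r : {set E} -> nat) : Prop :=
  ~ has_minor r U22_U02_rank.

Definition graph_rank (V Ed : finType) (ends : Ed -> V * V) (X : {set Ed}) : nat :=
  let adj := fun u v : V => [exists e in X,
      ((ends e).1 == u) && ((ends e).2 == v) ||
      ((ends e).1 == v) && ((ends e).2 == u)] in
  #|V| - #|[set [set w | connect adj v w] | v : V]|.

Definition K33_ends (e : 'I_3 * 'I_3) : ('I_3 + 'I_3) * ('I_3 + 'I_3) :=
  (inl e.1, inr e.2).

Definition MK33_rank : {set 'I_3 * 'I_3} -> nat := graph_rank K33_ends.

(* Main.v *)
Require Import Defs.
From HB Require Import structures.
From mathcomp Require Import all_boot all_order all_algebra.
From mathcomp Require Import zify.

Module P1.
Set Implicit Arguments. Unset Strict Implicit. Unset Printing Implicit Defensive.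
Import GRing.Theory.
Local Open Scope ring_scope.

Definition cd := (bool * bool * bool * bool * bool)%type.
Definition cbits (m : cd) : seq bool :=
  let: (a0, a1, a2, a3, a4) := m in [:: a0; a1; a2; a3; a4].
Definition cxor (m m' : cd) : cd :=
  let: (a0, a1, a2, a3, a4) := m in let: (b0, b1, b2, b3, b4) := m' in
  (a0 (+) b0, a1 (+) b1, a2 (+) b2, a3 (+) b3, a4 (+) b4).
Definition c0 : cd := (false, false, false, false, false).
Definition dec (m : cd) : 'rV['F_2]_5 := \row_(i < 5) (nth false (cbits m) i)%:R.
Definition code (v : 'rV['F_2]_5) : cd :=
  (v 0 (@Ordinal 5 0 isT) == 1, v 0 (@Ordinal 5 1 isT) == 1, v 0 (@Ordinal 5 2 isT) == 1,
   v 0 (@Ordinal 5 3 isT) == 1, v 0 (@Ordinal 5 4 isT) == 1).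

Lemma F2_cases (x : 'F_2) : x = (x == 1)%:R.
Proof. by case: x => [[|[|?]] Hx] //; apply: val_inj. Qed.

Lemma F2_eq1 (b : bool) : ((b%:R : 'F_2) == 1) = b.
Proof. by case: b. Qed.

Lemma F2_add (b b' : bool) : (b%:R + b'%:R : 'F_2) = (b (+) b')%:R.
Proof. by case: b; case: b'; apply: val_inj. Qed.

Lemma F2_opp (x : 'F_2) : - x = x.
Proof. by rewrite [x]F2_cases; case: (x == 1); apply: val_inj. Qed.

Lemma decK : cancel code dec.
Proof.
move=> v; apply/rowP => i; rewrite mxE.
have -> : (0 : 'I_1) = ord0 by apply: val_inj.
case: i => [[|[|[|[|[|?]]]]] Hi] //=; rewrite [RHS]F2_cases;
  by congr (_%:R); congr (v _ _ == 1); apply: val_inj.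
Qed.

Lemma codeK : cancel dec code.
Proof. by case=> [[[[a0 a1] a2] a3] a4]; rewrite /code /dec !mxE /= !F2_eq1. Qed.

Lemma dec_inj : injective dec. Proof. exact: can_inj codeK. Qed.

Lemma dec_xor m m' : dec (cxor m m') = dec m + dec m'.
Proof.
case: m => [[[[a0 a1] a2] a3] a4]; case: m' => [[[[b0 b1] b2] b3] b4].
by apply/rowP => i; rewrite !mxE; case: i => [[|[|[|[|[|?]]]]] Hi] //=; rewrite F2_add.
Qed.

Lemma dec0 : dec c0 = 0.
Proof. by apply/rowP => i; rewrite !mxE; case: i => [[|[|[|[|[|?]]]]] Hi]. Qed.

Lemma cxorK m : involutive (cxor m).
Proof.
case: m => [[[[a0 a1] a2] a3] a4] [[[[b0 b1] b2] b3] b4] /=.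
by rewrite !addKb.
Qed.

Lemma cxorC m m' : cxor m m' = cxor m' m.
Proof.
case: m => [[[[a0 a1] a2] a3] a4]; case: m' => [[[[b0 b1] b2] b3] b4] /=.
by rewrite ![_ (+) a0]addbC ![_ (+) a1]addbC ![_ (+) a2]addbC ![_ (+) a3]addbC ![_ (+) a4]addbC.
Qed.

End P1.
Import P1.

Module P2.
Set Implicit Arguments. Unset Strict Implicit. Unset Printing Implicit Defensive.
Import GRing.Theory.
Local Open Scope ring_scope.

Section Span.
Variable n : nat.
Implicit Types (v u : 'rV['F_2]_n) (S : 'M['F_2]_n).

Definition spanL (s : seq 'rV['F_2]_n) : 'M['F_2]_n := (\sum_(v <- s) <<v>>)%MS.

Lemma rank_cons v S : \rank (<<v>> + S)%MS = (\rank S + ~~ (v <= S)%MS)%N.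
Proof.
have [vS|vS] := boolP (v <= S)%MS.
  have /addsmx_idPr -> : (<<v>> <= S)%MS by rewrite genmxE.
  by rewrite addn0.
have := mxrank_sum_cap <<v>>%MS S; rewrite mxrank_gen rank_rV.
have -> : (v != 0) by apply: contraNneq vS => ->; rewrite sub0mx.
have -> : \rank (<<v>> :&: S)%MS = 0%N.
  have := mxrank_leqif_sup (capmxSl <<v>>%MS S); rewrite mxrank_gen rank_rV.
  have -> : (v != 0) by apply: contraNneq vS => ->; rewrite sub0mx.
  case=> le1 eq1; move: le1; rewrite leq_eqVlt ltnS leqn0 => /orP[/eqP h|/eqP //].
  move: eq1; rewrite h eqxx => /esym sv.
  by move: vS; rewrite -genmxE (submx_trans sv) ?capmxSr.
by rewrite addn0 => ->; rewrite add1n addn1.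
Qed.

Lemma submx_cons u v S :
  (u <= <<v>> + S)%MS = (u <= S)%MS || (u - v <= S)%MS.
Proof.
rewrite (adds_eqmx (genmxE v) (eqmx_refl S)).
apply/idP/idP.
  move=> /sub_addsmxP [[a w] /= ->].
  rewrite [a]mx11_scalar [a 0 0]F2_cases; case: (a 0 0 == 1).
    by rewrite mul_scalar_mx scale1r addrAC subrr add0r submxMl orbT.
  by rewrite mul_scalar_mx scale0r add0r submxMl.
case/orP => h.
  by rewrite (submx_trans h) ?addsmxSr.
by rewrite -[u](subrK v) addrC addmx_sub_adds.
Qed.

Lemma spanL_nil : spanL [::] = 0. Proof. by rewrite /spanL big_nil. Qed.
Lemma spanL_cons v s : spanL (v :: s) = (<<v>> + spanL s)%MS.
Proof. by rewrite /spanL big_cons. Qed.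

Lemma sub_spanL v s : v \in s -> (v <= spanL s)%MS.
Proof.
elim: s => //= w s IH; rewrite inE spanL_cons => /orP[/eqP->|/IH h].
  by rewrite -genmxE addsmxSl.
by rewrite (submx_trans h) ?addsmxSr.
Qed.

Lemma spanL_sub s m (B : 'M_(m, n)) : (forall v, v \in s -> (v <= B)%MS) -> (spanL s <= B)%MS.
Proof.
elim: s => [|w s IH] h; first by rewrite spanL_nil sub0mx.
rewrite spanL_cons addsmx_sub genmxE h ?mem_head //=.
by apply: IH => v vs; apply: h; rewrite inE vs orbT.
Qed.

End Span.

Fixpoint cspan (s : seq cd) : seq cd :=
  if s is a :: l then cspan l ++ map (cxor a) (cspan l) else [:: c0].
Fixpoint crank (s : seq cd) : nat :=
  if s is a :: l then (crank l + (a \notin cspan l))%N else 0%N.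

Lemma cspanP m s : (dec m <= spanL (map dec s))%MS = (m \in cspan s).
Proof.
elim: s m => [|a s IH] m /=.
  by rewrite spanL_nil submx0 inE -dec0 (inj_eq dec_inj).
rewrite spanL_cons submx_cons mem_cat.
have -> : dec m - dec a = dec (cxor a m).
  rewrite dec_xor addrC; congr (_ + _); apply/rowP => i; rewrite mxE; exact: F2_opp.
rewrite !IH; congr (_ || _).
by rewrite -[X in X \in map _ _](cxorK a m) (mem_map (can_inj (cxorK a))).
Qed.

Lemma crankP s : \rank (spanL (map dec s)) = crank s.
Proof. by elim: s => [|a s IH] /=; rewrite ?spanL_nil ?mxrank0 // spanL_cons rank_cons IH cspanP. Qed.

End P2.
Import P2.

Module P3.
Set Implicit Arguments. Unset Strict Implicit. Unset Printing Implicit Defensive.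
Import GRing.Theory.
Local Open Scope ring_scope.

Lemma mxrank_eq m1 m2 n (A : 'M['F_2]_(m1, n)) (B : 'M['F_2]_(m2, n)) :
  (A :=: B)%MS -> \rank A = \rank B.
Proof. by move=> e; apply/eqmx_rank/eqmxP. Qed.

Lemma vec_rank_list (E : finType) n (A : E -> 'rV['F_2]_n) (X : {set E}) (l : seq E) :
  X =i l -> vec_rank A X = \rank (spanL (map A l)).
Proof.
move=> Xl; rewrite /vec_rank; apply: mxrank_eq; apply/eqmxP/andP; split.
  apply/sumsmx_subP => x xX; rewrite genmxE sub_spanL //.
  by apply: map_f; rewrite -Xl.
apply: spanL_sub => v /mapP [x xl ->].
by rewrite (sumsmx_sup x) ?Xl // genmxE.
Qed.

Lemma vec_rank_code (E : finType) (c : E -> 'rV['F_2]_5) (X : {set E}) (l : seq E) :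
  X =i l -> vec_rank c X = crank (map (code \o c) l).
Proof.
move=> Xl; rewrite (vec_rank_list c Xl) -crankP -map_comp.
by congr (\rank (spanL _)); apply: eq_map => x /=; rewrite decK.
Qed.

Lemma mx_spanL m n (M : 'M['F_2]_(m, n)) : (M :=: spanL [seq row i M | i <- enum 'I_m])%MS.
Proof.
apply/eqmxP/andP; split.
  by apply/row_subP => i; rewrite sub_spanL //; apply: (map_f (fun j => row j M)); rewrite mem_enum.
by apply: spanL_sub => v /mapP [i _ ->]; rewrite row_sub.
Qed.

Lemma coordinatize (E : finType) n (A : E -> 'rV['F_2]_n) (t : 'I_5 -> E) :
  (vec_rank A setT <= 5)%N -> \rank (spanL [seq A (t i) | i <- enum 'I_5]) = 5%N ->
  exists c : E -> 'rV['F_2]_5,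
    [/\ (forall X, vec_rank c X = vec_rank A X),
        (forall x, A x = c x *m (\matrix_i A (t i))) &
        (forall i, c (t i) = delta_mx 0 i)].
Proof.
move=> rE rT.
set Bt : 'M_(5, n) := \matrix_i A (t i).
have rowBt i : row i Bt = A (t i) by rewrite rowK.
have rB : \rank Bt = 5%N.
  rewrite (mxrank_eq (mx_spanL Bt)); rewrite -[RHS]rT; congr (\rank (spanL _)).
  by apply: eq_map => i; rewrite rowBt.
have fB : row_free Bt by rewrite /row_free rB.
set SE := (\sum_(x in [set: E]) <<A x>>)%MS.
have BSE : (Bt <= SE)%MS.
  by apply/row_subP => i; rewrite rowBt (sumsmx_sup (t i)) ?inE // genmxE.
have AB x : (A x <= Bt)%MS.
  have sub1 : (Bt <= Bt + <<A x>>)%MS by rewrite addsmxSl.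
  have := mxrank_leqif_sup sub1.
  have le2 : (\rank (Bt + <<A x>>)%MS <= 5)%N.
    apply: leq_trans rE; apply: mxrankS; rewrite addsmx_sub BSE /=.
    by rewrite (sumsmx_sup x) ?inE.
  case=> _; rewrite rB; move: le2; rewrite leq_eqVlt => /orP[/eqP->|].
    by rewrite eqxx => /esym; rewrite addsmx_sub genmxE => /andP[].
  move=> lt _; move: (mxrankS sub1); rewrite rB => h.
  by move: (leq_ltn_trans h lt); rewrite ltnn.
exists (fun x => A x *m pinvmx Bt); split.
- move=> X; rewrite /vec_rank.
  rewrite -(mxrankMfree _ fB); apply: mxrank_eq.
  apply: eqmx_trans (sumsmxMr_gen _ _ _) _.
  apply: eqmx_sums => x _.
  apply: eqmx_trans (genmxE _) _; apply: eqmx_trans (eqmxMr _ (genmxE _)) _.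
  by rewrite mulmxKpV //; apply: eqmx_sym; apply: genmxE.
- by move=> x; rewrite mulmxKpV.
- move=> i; apply: (row_free_inj fB) => /=.
  by rewrite mulmxKpV // -rowE rowBt.
Qed.

End P3.
Import P3.

Module P4.
Set Implicit Arguments. Unset Strict Implicit. Unset Printing Implicit Defensive.

Notation V6 := ('I_3 + 'I_3)%type.
Definition o3 k (H : (k < 3)%N) : 'I_3 := Ordinal H.
Definition V6list : seq V6 :=
  [:: inl (@o3 0 isT); inl (@o3 1 isT); inl (@o3 2 isT);
      inr (@o3 0 isT); inr (@o3 1 isT); inr (@o3 2 isT)].
Lemma V6listP (v : V6) : v \in V6list.
Proof.
by case: v => [[[|[|[|?]]] H]|[[|[|[|?]]] H]] //; rewrite !inE /=;
   apply/orP; (try by left; apply/eqP; apply: val_inj); right;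
   rewrite ?inE /=;
   repeat (apply/orP; (try by left; apply/eqP; apply: val_inj); right).
Qed.

Definition adjl (l : seq ('I_3 * 'I_3)) : rel V6 := fun u v =>
  has (fun e => ((K33_ends e).1 == u) && ((K33_ends e).2 == v) ||
                ((K33_ends e).1 == v) && ((K33_ends e).2 == u)) l.
Definition rg (e : rel V6) (x : V6) := [seq y <- V6list | e x y].
Definition conn6 (e : rel V6) (x y : V6) := y \in dfs (rg e) 6 [::] x.
Definition ncomp (l : seq ('I_3 * 'I_3)) :=
  size (undup [seq [seq w <- V6list | conn6 (adjl l) v w] | v <- V6list]).

Lemma mem_back (U : finType) (eU : seq U) (S : {set U}) x :
  (forall y, y \in eU) -> (x \in [seq w <- eU | w \in S]) = (x \in S).
Proof. by move=> h; rewrite mem_filter h andbT. Qed.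

Lemma card_imset_undup (T : finType) (U : finType) (F : T -> {set U}) eT eU :
  (forall x, x \in eT) -> (forall y, y \in eU) ->
  #|[set F v | v : T]| = size (undup [seq [seq w <- eU | w \in F v] | v <- eT]).
Proof.
move=> hT hU.
rewrite [@imset]unlock cardsE.
have -> : #|image_mem F (mem T)| = size (undup (image_mem F (mem T))).
  by rewrite -(card_uniqP (undup_uniq _)); apply: eq_card => x; rewrite mem_undup.
have -> : size (undup (image_mem F (mem T))) = size (undup (map F eT)).
  apply: perm_size; apply: perm_undup => S.
  apply/mapP/mapP => [[x _ ->]|[x _ ->]]; exists x => //; by rewrite mem_enum.
set back := fun S : {set U} => [seq w <- eU | w \in S].
have bi : injective back.
  move=> S1 S2 h; apply/setP => x.
  by have := congr1 (fun s => x \in s) h; rewrite /back !mem_back.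
transitivity (size (map back (undup (map F eT)))); first by rewrite size_map.
by rewrite -undup_map_inj // -map_comp.
Qed.

Lemma conn6P (e : rel V6) x y : conn6 e x y = connect e x y.
Proof.
rewrite /conn6 -[6%N]/(3 + 3)%N -[in X in dfs _ X](card_ord 3) -card_sum.
have E : grel (rg e) =2 e by move=> a b; rewrite /= mem_filter V6listP andbT.
by apply/dfsP/connectP => [] [p hp ->]; exists p => //; rewrite ?(eq_path E) // -(eq_path E).
Qed.

Lemma MK33_list (X : {set 'I_3 * 'I_3}) (l : seq ('I_3 * 'I_3)) :
  X =i l -> MK33_rank X = (6 - ncomp l)%N.
Proof.
move=> Xl; rewrite /MK33_rank /graph_rank card_sum !card_ord.
rewrite (card_imset_undup _ V6listP V6listP) /ncomp.
congr (_ - size (undup _))%N; apply: eq_map => v; apply: eq_filter => w.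
rewrite inE conn6P (@eq_connect _ _ (adjl l)) //.
move=> a b; rewrite /adjl; apply/existsP/hasP => [[e /andP[eX h]]|[e el h]].
  by exists e; rewrite // -Xl.
by exists e; rewrite Xl el.
Qed.

End P4.
Import P4.

Module P5.
Set Implicit Arguments. Unset Strict Implicit. Unset Printing Implicit Defensive.

Definition cpar (m : cd) : bool :=
  let: (a0, a1, a2, a3, a4) := m in a0 (+) a1 (+) a2 (+) a3 (+) a4.
Definition bl := [:: true; false].
Definition allcd : seq cd :=
  [seq (x, a4) | x <- [seq (x, a3) | x <- [seq (x, a2) | x <- [seq (a0, a1) | a0 <- bl, a1 <- bl], a2 <- bl], a3 <- bl], a4 <- bl].
Lemma mem_allcd m : m \in allcd.
Proof. by case: m => [[[[[] []] []] []] []]. Qed.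
Definition odds := [seq m <- allcd | cpar m].

Fixpoint cbasis (s : seq cd) : seq cd :=
  if s is a :: l then (if a \in cspan l then cbasis l else a :: cbasis l) else [::].

Definition e33 a b (Ha : (a < 3)%N) (Hb : (b < 3)%N) : 'I_3 * 'I_3 := (Ordinal Ha, Ordinal Hb).
Definition E00 := @e33 0 0 isT isT.
Definition E01 := @e33 0 1 isT isT.
Definition E02 := @e33 0 2 isT isT.
Definition E10 := @e33 1 0 isT isT.
Definition E11 := @e33 1 1 isT isT.
Definition E12 := @e33 1 2 isT isT.
Definition E20 := @e33 2 0 isT isT.
Definition E21 := @e33 2 1 isT isT.
Definition E22 := @e33 2 2 isT isT.
Definition all9 := [:: E00; E01; E02; E10; E11; E12; E20; E21; E22].
Lemma mem_all9 e : e \in all9.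
Proof.
case: e => [[[|[|[|?]]] H1] [[|[|[|?]]] H2]] //;
by rewrite !inE; apply/or9P;
  first [ by constructor 1; apply/eqP; congr pair; apply: val_inj
        | by constructor 2; apply/eqP; congr pair; apply: val_inj
        | by constructor 3; apply/eqP; congr pair; apply: val_inj
        | by constructor 4; apply/eqP; congr pair; apply: val_inj
        | by constructor 5; apply/eqP; congr pair; apply: val_inj
        | by constructor 6; apply/eqP; congr pair; apply: val_inj
        | by constructor 7; apply/eqP; congr pair; apply: val_inj
        | by constructor 8; apply/eqP; congr pair; apply: val_inj
        | by constructor 9; apply/eqP; congr pair; apply: val_inj ].
Qed.

Definition Tl := [:: E00; E01; E02; E10; E20].
Definition units : seq cd :=
  [:: (true, false, false, false, false); (false, true, false, false, false);
      (false, false, true, false, false); (false, false, false, true, false);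
      (false, false, false, false, true)].
Definition Kc (e : 'I_3 * 'I_3) : cd :=
  match val e.1, val e.2 with
  | 0, 0 => (true, false, false, false, false)
  | 0, 1 => (false, true, false, false, false)
  | 0, _ => (false, false, true, false, false)
  | 1, 0 => (false, false, false, true, false)
  | 1, 1 => (true, true, false, true, false)
  | 1, _ => (true, false, true, true, false)
  | _, 0 => (false, false, false, false, true)
  | _, 1 => (true, true, false, false, true)
  | _, _ => (true, false, true, false, true)
  end.
Definition pat (i : nat) := [seq j != i | j <- iota 0 5].

Definition Kvals (e : 'I_3 * 'I_3) := [seq (6 - ncomp (mask (pat i) Tl ++ [:: e]))%N | i <- iota 0 5].
Definition Kranks (m : cd) := [seq crank (mask (pat i) units ++ [:: m]) | i <- iota 0 5].
Definition Kcheck := all (fun e => let v := Kvals e in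
   all (fun m => (Kranks m == v) ==> (m == Kc e)) allcd) all9.
Lemma Kcheck_ok : Kcheck. Proof. by vm_compute. Qed.

Definition W (p : cd) : seq ('I_3 * 'I_3) * ('I_3 * 'I_3) * ('I_3 * 'I_3) * ('I_3 * 'I_3) :=
  match p with
  | (true, true, false, false, false) => ([:: E00; E01; E10], E02, E20, E11)
  | (true, false, true, false, false) => ([:: E00; E02; E10], E01, E20, E12)
  | (false, true, true, false, false) => ([:: E01; E02; E11], E00, E20, E12)
  | (true, false, false, true, false) => ([:: E00; E01; E10], E02, E20, E11)
  | (false, true, false, true, false) => ([:: E00; E01; E10], E02, E20, E11)
  | (false, false, true, true, false) => ([:: E00; E02; E10], E01, E20, E12)
  | (true, true, true, true, false) => ([:: E01; E02; E11], E00, E20, E12)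
  | (true, false, false, false, true) => ([:: E00; E01; E20], E02, E10, E21)
  | (false, true, false, false, true) => ([:: E00; E01; E20], E02, E10, E21)
  | (false, false, true, false, true) => ([:: E00; E02; E20], E01, E10, E22)
  | (true, true, true, false, true) => ([:: E01; E02; E21], E00, E10, E22)
  | (false, false, false, true, true) => ([:: E10; E20; E11], E00, E02, E21)
  | (true, true, false, true, true) => ([:: E10; E20; E11], E00, E02, E21)
  | (true, false, true, true, true) => ([:: E10; E20; E12], E00, E01, E22)
  | (false, true, true, true, true) => ([:: E11; E12; E21], E00, E01, E22)
  | _ => ([::], E00, E00, E00)
  end.

Definition sel4 (b0 b1 b2 b3 : bool) (m0 m1 m2 m3 : cd) : seq cd :=
  (if b0 then [:: m0] else [::]) ++ (if b1 then [:: m1] else [::]) ++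
  (if b2 then [:: m2] else [::]) ++ (if b3 then [:: m3] else [::]).

Definition minor_chk (S : seq cd) (m0 m1 m2 m3 : cd) :=
  [&& uniq [:: m0; m1; m2; m3], all (fun m => m \notin S) [:: m0; m1; m2; m3] &
   all (fun b0 => all (fun b1 => all (fun b2 => all (fun b3 =>
     crank (sel4 b0 b1 b2 b3 m0 m1 m2 m3 ++ S) == (crank S + b0 + b1)%N) bl) bl) bl) bl].

Definition Wcheck := all (fun p => (~~ cpar p && (p != c0)) ==>
  (let: (C0, a, b, c) := W p in minor_chk (map Kc C0) (Kc a) (Kc b) (Kc c) p)) allcd.
Lemma Wcheck_ok : Wcheck. Proof. by vm_compute. Qed.

Definition chkB (B : seq cd) :=
  let sp := cspan B in
  (size [seq w <- allcd | cpar w && (w \in sp) && (w \notin B)] <= 1)%N.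
Lemma Bcheck0 : chkB [::]. Proof. by vm_compute. Qed.
Lemma Bcheck1 : all (fun a => chkB [:: a]) odds. Proof. by vm_compute. Qed.
Lemma Bcheck2 : all (fun a => all (fun b => chkB [:: a; b]) odds) odds. Proof. by vm_compute. Qed.
Lemma Bcheck3 : all (fun a => all (fun b => all (fun c => chkB [:: a; b; c]) odds) odds) odds.
Proof. by vm_compute. Qed.

Lemma crank_dup a : (crank [:: a; a] <= 1)%N.
Proof. by move: (mem_allcd a); move: a; apply/allP; vm_compute. Qed.

End P5.
Import P5.

Module P6.
Set Implicit Arguments. Unset Strict Implicit. Unset Printing Implicit Defensive.
Import GRing.Theory.
Local Open Scope ring_scope.

Lemma cspan_xor a m l : a \in cspan l -> m \in cspan l -> cxor a m \in cspan l.
Proof. by rewrite -!cspanP dec_xor => h1 h2; rewrite addmx_sub. Qed.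

Lemma mem_cspan_cons a l m : (m \in cspan (a :: l)) = (m \in cspan l) || (cxor a m \in cspan l).
Proof.
rewrite /= mem_cat; congr (_ || _).
by rewrite -[X in X \in map _ _](cxorK a m) (mem_map (can_inj (cxorK a))).
Qed.

Lemma size_cbasis s : size (cbasis s) = crank s.
Proof. by elim: s => //= a l IH; case: ifP => h /=; rewrite IH ?addn0 ?addn1. Qed.

Lemma cbasis_sub s : {subset cbasis s <= s}.
Proof.
elim: s => //= a l IH x; case: ifP => _; first by move/IH => h; rewrite inE h orbT.
by rewrite !inE => /orP[->|/IH ->]; rewrite ?orbT.
Qed.

Lemma cspan_cbasis s : cspan (cbasis s) =i cspan s.
Proof.
elim: s => //= a l IH m; case: ifP => h.
  rewrite IH mem_cat; case: (boolP (m \in cspan l)) => //= hm.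
  apply/esym/negbTE; apply: contra hm => /mapP [k kl ->].
  exact: cspan_xor.
by rewrite mem_cspan_cons !IH -mem_cspan_cons.
Qed.

Lemma sum_dec m : (\sum_(j < 5) dec m 0 j) = (cpar m)%:R :> 'F_2.
Proof.
case: m => [[[[a0 a1] a2] a3] a4].
by rewrite !big_ord_recl big_ord0 !mxE /= addr0 !F2_add /= !addbA.
Qed.

Lemma vec_rank_mul (E : finType) n p (c : E -> 'rV['F_2]_n) (M : 'M['F_2]_(n, p)) X :
  row_free M -> vec_rank (fun x => c x *m M) X = vec_rank c X.
Proof.
move=> fM; rewrite /vec_rank -(mxrankMfree _ fM); apply: mxrank_eq.
apply: eqmx_sym; apply: eqmx_trans (sumsmxMr_gen _ _ _) _.
apply: eqmx_sums => x _.
apply: eqmx_trans (genmxE _) _; apply: eqmx_trans (eqmxMr _ (genmxE _)) _.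
by apply: eqmx_sym; apply: genmxE.
Qed.

Lemma imset_list (E F : finType) (f : F -> E) (l : seq F) : f @: [set x in l] =i map f l.
Proof.
move=> y; apply/imsetP/mapP => [[x]|[x xl ->]]; first by rewrite inE => xl ->; exists x.
by exists x; rewrite ?inE.
Qed.

Definition i4 k (H : (k < 4)%N) : 'I_4 := Ordinal H.

Definition ordl4 := [:: @i4 0 isT; @i4 1 isT; @i4 2 isT; @i4 3 isT].
Lemma mem_ordl4 i : i \in ordl4.
Proof.
case: i => [[|[|[|[|?]]]] H] //; rewrite !inE;
  repeat (apply/orP; (try by left; apply/eqP; apply: val_inj); right);
  by apply/eqP; apply: val_inj.
Qed.

Lemma card_I4 (A : {set 'I_4}) : #|A| = count (mem A) ordl4.
Proof.
rewrite cardE; transitivity (size (filter (mem A) ordl4)); last by rewrite size_filter.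
apply: perm_size; apply: uniq_perm; rewrite ?enum_uniq //.
  by apply: filter_uniq.
move=> x; have h := mem_ordl4 x; rewrite !mem_filter h andbT.
have e : x \in index_enum 'I_4 := mem_index_enum x.
by move: e; rewrite /index_enum unlock => ->; rewrite andbT.
Qed.

Lemma i4_eq a b (Ha : (a < 4)%N) (Hb : (b < 4)%N) : (i4 Ha == i4 Hb) = (a == b).
Proof. by []. Qed.

Lemma U22_val X : U22_U02_rank X = ((@i4 0 isT \in X) + (@i4 1 isT \in X))%N.
Proof.
rewrite /U22_U02_rank.
have -> : (inord 0 : 'I_4) = @i4 0 isT by apply: val_inj; rewrite /= inordK.
have -> : (inord 1 : 'I_4) = @i4 1 isT by apply: val_inj; rewrite /= inordK.
rewrite card_I4 /= !inE !i4_eq /= !andbT !andbF !addn0.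
by [].
Qed.

Lemma minor_codes (E : finType) (r : {set E} -> nat) (c : E -> 'rV['F_2]_5)
  (hr : forall X, r X = vec_rank c X) (e0 e1 e2 e3 : E) (lC : seq E) :
  minor_chk (map (code \o c) lC) (code (c e0)) (code (c e1)) (code (c e2)) (code (c e3)) ->
  has_minor r U22_U02_rank.
Proof.
set G := code \o c.
case/and3P => hu hn hb.
have hb' b0 b1 b2 b3 : crank (sel4 b0 b1 b2 b3 (G e0) (G e1) (G e2) (G e3) ++ map G lC)
    = (crank (map G lC) + b0 + b1)%N.
  have mb b : b \in bl by case: b.
  move/allP/(_ b0 (mb b0))/allP/(_ b1 (mb b1))/allP/(_ b2 (mb b2))/allP/(_ b3 (mb b3)): hb.
  by move/eqP.
pose ee := [:: e0; e1; e2; e3].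
pose f' := fun i : 'I_4 => nth e0 ee i.
have Gf i : G (f' i) = nth (G e0) [:: G e0; G e1; G e2; G e3] i.
  by rewrite /f' -(nth_map e0 (G e0)) //; case: i => [[|[|[|[|?]]]] H].
exists [set y in lC], f'; split.
- move=> i j h; have := congr1 G h; rewrite !Gf => /eqP.
  by rewrite nth_uniq //= => /eqP /val_inj.
- rewrite disjoint_subset; apply/subsetP => y /imsetP [i _ ->]; rewrite !inE; apply/negP => yl.
  have hi : G (f' i) \in [:: G e0; G e1; G e2; G e3].
    by rewrite Gf mem_nth //; case: i => [[|[|[|[|?]]]] H].
  by move/allP: hn => /(_ _ hi); rewrite (map_f G yl).
- move=> X; rewrite U22_val !hr.
  rewrite (vec_rank_code c (l := [seq f' i | i <- ordl4 & i \in X] ++ lC)); last first.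
    move=> y; rewrite !inE mem_cat; congr (_ || _).
    apply/imsetP/mapP => [[i iX ->]|[i]]; first by exists i; rewrite // mem_filter iX mem_ordl4.
    by rewrite mem_filter => /andP[iX _] ->; exists i.
  rewrite (vec_rank_code c (X := [set y in lC]) (l := lC)); last by move=> y; rewrite inE.
  rewrite map_cat -/G.
  have -> : map G [seq f' i | i <- ordl4 & i \in X] =
     sel4 (@i4 0 isT \in X) (@i4 1 isT \in X) (@i4 2 isT \in X) (@i4 3 isT \in X)
          (G e0) (G e1) (G e2) (G e3).
    by rewrite /=; case: (@i4 0 isT \in X); case: (@i4 1 isT \in X);
       case: (@i4 2 isT \in X); case: (@i4 3 isT \in X).
  by rewrite hb' -addnA addKn.
Qed.

End P6.
Import P6.

Module P7.
Set Implicit Arguments. Unset Strict Implicit. Unset Printing Implicit Defensive.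
Import GRing.Theory.
Local Open Scope ring_scope.

Lemma size_le1_eq (T : eqType) (s : seq T) x y :
  (size s <= 1)%N -> x \in s -> y \in s -> x = y.
Proof. by case: s => [|a [|b s]] //= _; rewrite !inE => /eqP-> /eqP->. Qed.

Lemma Bcheck_use B : (size B <= 3)%N -> all cpar B -> forall w1 w2,
  cpar w1 -> cpar w2 -> w1 \in cspan B -> w2 \in cspan B -> w1 \notin B -> w2 \notin B -> w1 = w2.
Proof.
move=> sB oB w1 w2 p1 p2 s1 s2 n1 n2.
have hB : chkB B.
  have od a : cpar a -> a \in odds by move=> pa; rewrite mem_filter pa mem_allcd.
  move: sB oB; case: B {s1 s2 n1 n2} => [|a [|b [|c [|d B]]]] hs.
  - by move=> _; exact: Bcheck0.
  - move=> /andP [pa _]; have := allP Bcheck1 a (od a pa); move=> h; exact h.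
  - move=> /and3P [pa pb _]; have := allP (allP Bcheck2 a (od a pa)) b (od b pb); move=> h; exact h.
  - move=> /and4P [pa pb pc _].
    have := allP (allP (allP Bcheck3 a (od a pa)) b (od b pb)) c (od c pc); move=> h; exact h.
  - by exfalso; move: hs; rewrite /=; case: (size B).
apply: (size_le1_eq hB); rewrite mem_filter mem_allcd andbT; [by rewrite p1 s1 n1 | by rewrite p2 s2 n2].
Qed.

Lemma enum5_map (T : Type) (F : 'I_3 * 'I_3 -> T) (s : seq ('I_3 * 'I_3)) x0 :
  size s = 5%N -> [seq F (nth x0 s i) | i : 'I_5 <- enum 'I_5] = map F s.
Proof.
move=> hs.
rewrite -{2}(mkseq_nth x0 s) hs /mkseq -(val_enum_ord 5) -!map_comp.
by apply: eq_map.
Qed.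

End P7.
Import P7.

Module P8.
Set Implicit Arguments. Unset Strict Implicit. Unset Printing Implicit Defensive.
Import GRing.Theory.
Local Open Scope ring_scope.

Lemma common (E : finType) (r : {set E} -> nat) (f : 'I_3 * 'I_3 -> E) :
  r [set: E] = 5%N -> (forall X, MK33_rank X = r (f @: X)) ->
  forall m (B : E -> 'rV['F_2]_m), (forall X, r X = vec_rank B X) ->
  exists c : E -> 'rV['F_2]_5,
    [/\ forall X, r X = vec_rank c X,
        forall x, B x = c x *m \matrix_i B (f (nth E00 Tl i)) &
        forall e, code (c (f e)) = Kc e].
Proof.
move=> rE hf m B hB.
have KR (c : E -> 'rV['F_2]_5) : (forall X, r X = vec_rank c X) ->
    forall l, crank (map (code \o c \o f) l) = (6 - ncomp l)%N.
  move=> hc l; rewrite -(@MK33_list [set x in l]) ?hf; last by move=> x; rewrite inE.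
  by rewrite hc (vec_rank_code c (imset_list f l)) map_comp.
have [] := @coordinatize E m B (fun i => f (nth E00 Tl i)).
- by rewrite -hB rE.
- rewrite (enum5_map (B \o f)) // map_comp -(vec_rank_list B (imset_list f Tl)) -hB -hf.
  rewrite (@MK33_list _ Tl); last by move=> x; rewrite inE.
  by vm_compute.
move=> c [vc Bc tc]; exists c; split => //.
  by move=> X; rewrite hB vc.
have hc : forall X, r X = vec_rank c X by move=> X; rewrite hB vc.
set G := code \o c \o f.
have GT : map G Tl = units.
  have t0 := tc (@Ordinal 5 0 isT); have t1 := tc (@Ordinal 5 1 isT);
  have t2 := tc (@Ordinal 5 2 isT); have t3 := tc (@Ordinal 5 3 isT);
  have t4 := tc (@Ordinal 5 4 isT); rewrite /= in t0 t1 t2 t3 t4.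
  by rewrite /= /G /= t0 t1 t2 t3 t4 /code !mxE.
move=> e; have := Kcheck_ok; rewrite /Kcheck => /allP /(_ e (mem_all9 e)).
move/allP => /(_ (G e) (mem_allcd _)) /implyP => h.
apply/eqP; apply: h; apply/eqP.
rewrite /Kranks /Kvals; apply: eq_map => i.
by rewrite -GT -map_mask -(map_cons G e [::]) -map_cat KR.
Qed.

End P8.
Import P8.

Module P9.
Set Implicit Arguments. Unset Strict Implicit. Unset Printing Implicit Defensive.
Import GRing.Theory.
Local Open Scope ring_scope.

Lemma rank1_code (E : finType) (r : {set E} -> nat) (c : E -> 'rV['F_2]_5) x :
  (forall X, r X = vec_rank c X) -> r [set x] = 1%N -> code (c x) != c0.
Proof.
move=> hc; rewrite hc (vec_rank_code c (l := [:: x])); last by move=> y; rewrite !inE.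
by rewrite /= inE; case: (code (c x) == c0).
Qed.

Lemma code_inj (E : finType) (r : {set E} -> nat) (c : E -> 'rV['F_2]_5) :
  (forall X, r X = vec_rank c X) -> (forall e f, e != f -> r [set e; f] = 2%N) ->
  injective (code \o c).
Proof.
move=> hc s2 x y h; apply/eqP; apply/negPn/negP => nxy.
have := s2 _ _ nxy; rewrite hc (vec_rank_code c (l := [:: x; y])); last by move=> z; rewrite !inE.
have -> : map (code \o c) [:: x; y] = [:: code (c y); code (c y)] by move: h => /= h; rewrite /= h.
move=> e; move: (crank_dup (code (c y))); by rewrite e.
Qed.

Definition Maff : 'M['F_2]_(5, 5 + 1) := row_mx (1%:M : 'M_5) (const_mx 1 : 'M_(5, 1)).

Lemma Maff_free : row_free Maff.
Proof.
rewrite /row_free eqn_leq rank_leq_row /=.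
have := mxrankM_maxl Maff (col_mx (1%:M : 'M_5) (0 : 'M_(1, 5))).
by rewrite /Maff mul_row_col mulmx0 addr0 mulmx1 mxrank1.
Qed.

Lemma Maff_last (v : 'rV['F_2]_5) : (v *m Maff) 0 (rshift 5 (ord0 : 'I_1)) = (cpar (code v))%:R.
Proof.
rewrite /Maff mul_mx_row row_mxEr mxE.
under eq_bigr => j _ do rewrite mxE mulr1.
by rewrite -sum_dec decK.
Qed.

End P9.
Import P9.


Theorem lemma4p3 (E : finType) (r : {set E} -> nat) :
  matroid_rank r -> binary r -> simple_matroid r -> r [set: E] = 5 ->
  has_restriction r MK33_rank ->
  (two_two_uniform r <-> affine r).
Proof.
move=> [rle rmono rsub] [n [A hA]] [s1 s2] rE [f [finj hf]].
have cm := common rE hf.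
split.
- move=> U.
  have [c [hc _ Kf]] := cm _ A hA.
  have par x : cpar (code (c x)).
    apply/negPn/negP => np.
    have nz := rank1_code hc (s1 x).
    apply: U.
    have := Wcheck_ok; rewrite /Wcheck => /allP /(_ (code (c x)) (mem_allcd _)) /implyP.
    rewrite np nz => /(_ isT).
    case: (W (code (c x))) => [[[C0 a] b] cc] h.
    apply: (minor_codes hc (e0 := f a) (e1 := f b) (e2 := f cc) (e3 := x) (lC := map f C0)).
    have -> : map (code \o c) (map f C0) = map Kc C0.
      by rewrite -map_comp; apply: eq_map => e /=; rewrite Kf.
    by rewrite !Kf.
  exists 5, (fun x => (c x *m Maff)%R); split.
    move=> e; have -> : (ord_max : 'I_(5.+1)) = rshift 5 (ord0 : 'I_1) by apply: val_inj.
    by rewrite Maff_last par.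
  by move=> X; rewrite hc vec_rank_mul // Maff_free.
- move=> [n2 [A2 [h1 hA2]]] [C [f' [inj' disj' rk']]].
  have [c2 [hc2 Bc2 _]] := cm _ A2 hA2.
  set g := code \o c2.
  have par x : cpar (g x).
    have := congr1 (fun M : 'rV['F_2]_n2.+1 => M ord0 ord_max) (Bc2 x); rewrite h1 mxE.
    under eq_bigr => j _ do rewrite mxE h1 GRing.mulr1.
    rewrite -[c2 x]decK sum_dec => /esym/eqP; by rewrite F2_eq1.
  have ginj : injective g := code_inj hc2 s2.
  set S := map g (enum C).
  have rC : r C = crank S by rewrite hc2 (vec_rank_code c2 (l := enum C)) // => y; rewrite mem_enum.
  have loop (i : 'I_4) : i != i4 (isT : 0 < 4)%N -> i != i4 (isT : 1 < 4)%N -> g (f' i) \in cspan S.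
    move=> n0 n1; have := rk' [set i]; rewrite U22_val !inE ![_ == i]eq_sym (negbTE n0) (negbTE n1).
    rewrite imset_set1 hc2 (vec_rank_code c2 (l := f' i :: enum C)); last first.
      by move=> y; rewrite !inE mem_enum.
    rewrite rC /= -/S addKn.
    by case: (g (f' i) \in cspan S).
  have r3 : (crank S <= 3)%N.
    have := rk' [set i4 (isT : 0 < 4)%N; i4 (isT : 1 < 4)%N]; rewrite U22_val !inE !i4_eq /= => e.
    have : (r (f' @: [set i4 (isT : 0 < 4)%N; i4 (isT : 1 < 4)%N] :|: C) <= 5)%N.
      by rewrite -rE rmono ?subsetT.
    rewrite -rC; move: e; move: (r (_ :|: C)) (r C) => a b; lia.
  have nS (i : 'I_4) : g (f' i) \notin S.
    apply/negP => /mapP [y yC hy]; move: (ginj _ _ hy) => eq.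
    have hi : f' i \in [set f' x | x in 'I_4] by apply/imsetP; exists i.
    have := disjointFr disj' hi.
    by rewrite eq -(mem_enum C) yC.
  set B := cbasis S.
  have hB : (size B <= 3)%N by rewrite size_cbasis.
  have oB : all cpar B by apply/allP => w /cbasis_sub /mapP [y _ ->]; exact: par.
  have nB (i : 'I_4) : g (f' i) \notin B by apply: contra (nS i); apply: cbasis_sub.
  have := Bcheck_use hB oB (par (f' (i4 (isT : 2 < 4)%N))) (par (f' (i4 (isT : 3 < 4)%N))).
  rewrite !cspan_cbasis !loop // => /(_ isT isT (nB _) (nB _)) /ginj /inj' /eqP.
  by rewrite i4_eq.
Qed.
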